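(* For every pair $(k,\ell)$ of positive integers and every prime power $q$, there is a constant $f(k,\ell,q)$ such that every simple, cosimple, $GF(q)$-representable $(k,\ell)$-uniform matroid $M$ satisfies $r(M)\leq f(k,\ell,q)$. Moreover, taking $f(k,\ell,q)$ to be the maximum rank of such a matroid, if $k\geq 2$ then $$f(k,\ell,q)\leq \max\{f(k-1,\ell+1,q),\ f(1,\ell,q)+(k-1)\}.$$
   Context: For positive integers $k,\ell$, a matroid is $(k,\ell)$-uniform if it has no minor isomorphic to $U_{k,k}\oplus U_{0,\ell}$. A matroid is cosimple if its dual is simple. *)

(* Defs.v *)
From HB Require Import structures.
From mathcomp Require Import all_boot all_order all_algebra all_field.
Set Implicit Arguments. Unset Strict Implicit. Unset Printing Implicit Defensive.

Record matroid (T : finType) := Matroid {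
  ground : {set T};
  indep : {set {set T}} }.

Definition is_matroid (T : finType) (M : matroid T) : Prop :=
  [/\ set0 \in indep M,
      (forall A : {set T}, A \in indep M -> A \subset ground M),
      (forall A B : {set T}, B \in indep M -> A \subset B -> A \in indep M) &
      (forall A B : {set T}, A \in indep M -> B \in indep M -> #|A| < #|B| ->
         exists2 x, x \in B :\: A & x |: A \in indep M)].

Definition mrank (T : finType) (M : matroid T) (X : {set T}) : nat :=
  \max_(A : {set T} | (A \in indep M) && (A \subset X)) #|A|.

Definition rk (T : finType) (M : matroid T) : nat := mrank M (ground M).

Definition is_basis (T : finType) (M : matroid T) (B : {set T}) : bool :=
  (B \in indep M) && (#|B| == rk M).

Definition delete (T : finType) (M : matroid T) (D : {set T}) : matroid T :=
  Matroid (ground M :\: D) [set A in indep M | A \subset ground M :\: D].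

Definition contract (T : finType) (M : matroid T) (C : {set T}) : matroid T :=
  Matroid (ground M :\: C)
    [set A : {set T} | (A \subset ground M :\: C) &&
             (mrank M (A :|: C) == #|A| + mrank M C)].

(* dual matroid M^* : bases are complements of bases *)
Definition dual (T : finType) (M : matroid T) : matroid T :=
  Matroid (ground M)
    [set A : {set T} | (A \subset ground M) &&
             [exists B : {set T}, is_basis M B && [disjoint A & B]]].

Definition simple (T : finType) (M : matroid T) : Prop :=
  (forall x : T, x \in ground M -> [set x] \in indep M) /\
  (forall x y : T, x \in ground M -> y \in ground M -> x != y ->
     [set x; y] \in indep M).

Definition cosimple (T : finType) (M : matroid T) : Prop := simple (dual M).

Definition iso (T T' : finType) (M : matroid T) (N : matroid T') : Prop :=
  exists f : T -> T',
    [/\ {in ground M &, injective f}, f @: ground M = ground N &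
        forall A : {set T}, A \subset ground M -> (A \in indep M <-> f @: A \in indep N)].

Definition is_minor (T : finType) (N M : matroid T) : Prop :=
  exists C D : {set T},
    [/\ C \subset ground M, D \subset ground M, [disjoint C & D] &
        N = delete (contract M C) D].

Definition U (r n : nat) : matroid 'I_n :=
  Matroid setT [set A : {set 'I_n} | #|A| <= r].

Definition dsum (T1 T2 : finType) (M1 : matroid T1) (M2 : matroid T2)
  : matroid (T1 + T2)%type :=
  Matroid (inl @: ground M1 :|: inr @: ground M2)
    [set A : {set (T1 + T2)%type} |
       ([set x | inl x \in A] \in indep M1) &&
       ([set y | inr y \in A] \in indep M2) &&
       (A \subset inl @: ground M1 :|: inr @: ground M2)].

Definition kl_uniform (k l : nat) (T : finType) (M : matroid T) : Prop :=
  ~ exists N : matroid T, is_minor N M /\ iso N (dsum (U k k) (U 0 l)).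

(* GF(q)-representable: some field with q elements and vectors v e in F^n
   such that A is independent iff the vectors (v a)_{a in A} are linearly
   independent (i.e. the #|A| x n matrix with these rows has rank #|A|). *)
Definition representable (q : nat) (T : finType) (M : matroid T) : Prop :=
  exists (F : finFieldType) (n : nat) (v : T -> 'rV[F]_n),
    #|F| = q /\
    forall A : {set T}, A \subset ground M ->
      (A \in indep M <->
       \rank (\matrix_(i < #|A|, j < n) v (@enum_val T (mem A) i) 0 j)%R = #|A|).

Definition prime_power (q : nat) : Prop :=
  exists p e, [/\ prime p, 0 < e & q = p ^ e].

Definition good (k l q : nat) (T : finType) (M : matroid T) : Prop :=
  [/\ is_matroid M, simple M, cosimple M, representable q M & kl_uniform k l M].

(* Main.v *)
Require Import Defs.
From mathcomp Require Import all_boot all_order all_algebra all_field.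
From mathcomp Require Import zify.
From Stdlib Require Import ClassicalEpsilon Classical.
Set Implicit Arguments. Unset Strict Implicit. Unset Printing Implicit Defensive.
Import GRing.Theory.

Section MatroidBasics.
Variables (T : finType) (M : matroid T).
Hypothesis hM : is_matroid M.
Implicit Types (A B C X Y L : {set T}).

Lemma m_set0 : set0 \in indep M. Proof. by case: hM. Qed.
Lemma m_sub A : A \in indep M -> A \subset ground M. Proof. by case: hM => _ H _ _; apply: H. Qed.
Lemma m_her A B : B \in indep M -> A \subset B -> A \in indep M.
Proof. by case: hM => _ _ H _; apply: H. Qed.
Lemma m_aug A B : A \in indep M -> B \in indep M -> #|A| < #|B| ->
  exists2 x, x \in B :\: A & x |: A \in indep M.
Proof. by case: hM => _ _ _ H; apply: H. Qed.

Lemma mrank_ge A X : A \in indep M -> A \subset X -> #|A| <= mrank M X.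
Proof. by move=> h1 h2; rewrite /mrank; apply: (leq_bigmax_cond (F := fun A : {set T} => #|A|)); rewrite h1. Qed.

Lemma mrank_wit X : exists A, [/\ A \in indep M, A \subset X & #|A| = mrank M X].
Proof.
rewrite /mrank.
have : 0 < #|[pred A : {set T} | (A \in indep M) && (A \subset X)]|.
  by apply/card_gt0P; exists set0; rewrite inE m_set0 sub0set.
move/(eq_bigmax_cond (fun A : {set T} => #|A|)) => [A0 hA0 ->].
by exists A0; move: hA0; rewrite inE => /andP[-> ->].
Qed.

Lemma mrank_le_card X : mrank M X <= #|X|.
Proof. by apply/bigmax_leqP => A /andP[_ h]; apply: subset_leq_card. Qed.

Lemma mrank_mono X Y : X \subset Y -> mrank M X <= mrank M Y.
Proof.
move=> hXY; apply/bigmax_leqP => A /andP[h1 h2]; apply: mrank_ge h1 _.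
exact: subset_trans hXY.
Qed.

Lemma mrank_indep A : A \in indep M -> mrank M A = #|A|.
Proof. by move=> h; apply/eqP; rewrite eqn_leq mrank_le_card mrank_ge. Qed.

Lemma mrank_indepE A : (A \in indep M) = (mrank M A == #|A|).
Proof.
apply/idP/idP; first by move/mrank_indep->.
move/eqP=> h; have [B [hB hBA hc]] := mrank_wit A.
have -> : A = B. by apply/esym/eqP; rewrite eqEcard hBA hc h leqnn.
done.
Qed.

Lemma mrank_addU X Y : mrank M (X :|: Y) <= mrank M X + #|Y|.
Proof.
have [A [hA hAXY <-]] := mrank_wit (X :|: Y).
rewrite -(cardsID X A); apply: leq_add.
  by apply: mrank_ge; [apply: m_her hA _; apply: subsetIl | apply: subsetIr].
apply: subset_leq_card; apply/subsetP => x; rewrite !inE => /andP[hx hxA].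
by move/subsetP: hAXY => /(_ x hxA); rewrite inE (negbTE hx).
Qed.

Lemma mrank_closure C L : (forall e, e \in L -> mrank M (e |: C) = mrank M C) ->
  mrank M (C :|: L) = mrank M C.
Proof.
move=> hL; apply/eqP; rewrite eqn_leq; apply/andP; split; last by apply: mrank_mono; apply: subsetUl.
have [A [hA hAs hAc]] := mrank_wit (C :|: L).
have [A0 [hA0 hA0s hA0c]] := mrank_wit C.
rewrite leqNgt; apply/negP => hlt.
have hlt' : #|A0| < #|A| by rewrite hA0c hAc.
have [x hx hxA] := m_aug hA0 hA hlt'.
move: hx; rewrite inE => /andP[hxA0 hxA'].
have hxCL : x \in C :|: L by move/subsetP: hAs; apply.
have hge : #|A0| < mrank M (x |: C).
  have := mrank_ge hxA (setUS [set x] hA0s); by rewrite cardsU1 hxA0.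
move: hxCL; rewrite inE => /orP[hxC|hxL].
  by move: hge; rewrite (setUidPr _) ?sub1set // hA0c ltnn.
by move: hge; rewrite hL // hA0c ltnn.
Qed.

Lemma basis_ext C0 : C0 \in indep M -> exists B, [/\ B \in indep M, C0 \subset B & #|B| = rk M].
Proof.
move=> hC0.
have [B0 [hB0 _ hB0c]] := mrank_wit (ground M).
have : forall d C, C \in indep M -> #|C| <= rk M -> rk M - #|C| = d ->
   exists B, [/\ B \in indep M, C \subset B & #|B| = rk M].
  2: by move=> H; apply: (H _ C0 hC0 (mrank_ge hC0 (m_sub hC0)) erefl).
elim=> [|d IH] C hC hle hd.
  exists C; split => //; apply/eqP; rewrite eqn_leq hle /=.
  by rewrite -subn_eq0 hd.
have hlt' : #|C| < #|B0| by rewrite hB0c -subn_gt0 hd.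
have [x hx hxC] := m_aug hC hB0 hlt'.
move: hx; rewrite inE => /andP[hxn _].
have h1 : #|x |: C| <= rk M by apply: mrank_ge hxC (m_sub hxC).
have h2 : rk M - #|x |: C| = d by rewrite cardsU1 hxn add1n subnS hd.
have [B [h3 h4 h5]] := IH (x |: C) hxC h1 h2.
by exists B; split => //; apply: subset_trans h4; apply: subsetUr.
Qed.

End MatroidBasics.

Definition Bad (k l : nat) (T : finType) (M : matroid T) : Prop :=
  exists X : {set T}, [/\ X \subset ground M, mrank M X + k <= rk M & mrank M X + l <= #|X|].

Definition isl (k l : nat) (s : ('I_k + 'I_l)%type) : bool := if s is inl _ then true else false.

Lemma minor_bad (k l : nat) (T : finType) (M : matroid T) : is_matroid M ->
  (exists N : matroid T, is_minor N M /\ iso N (dsum (U k k) (U 0 l))) -> Bad k l M.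
Proof.
move=> hM [N [[C [D [hCE hDE hCD ->]]] [f [finj fim find]]]].
set G := ground (delete (contract M C) D).
have hG : G = (ground M :\: C) :\: D by [].
set A0 := G :&: [set x | isl (f x)].
set L := G :&: [set x | ~~ isl (f x)].
have hA0G : A0 \subset G by apply: subsetIl.
have hLG : L \subset G by apply: subsetIl.
have hGE : G \subset ground M :\: C by rewrite hG subsetDl.
have fA0 : f @: A0 = inl @: [set: 'I_k].
  apply/setP => s; apply/imsetP/imsetP.
  - case=> x; rewrite !inE => /andP[hx]; case: (f x) => // j _ ->.
    by exists j; rewrite ?inE.
  - case=> j _ ->.
    have : inl j \in f @: G by rewrite fim /= inE; apply/orP; left; apply/imsetP; exists j; rewrite ?inE.
    case/imsetP => x hx hfx; exists x => //.
    by rewrite inE hx /= inE -hfx.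
have fL : f @: L = inr @: [set: 'I_l].
  apply/setP => s; apply/imsetP/imsetP.
  - case=> x; rewrite !inE => /andP[hx]; case: (f x) => // j _ ->.
    by exists j; rewrite ?inE.
  - case=> j _ ->.
    have : inr j \in f @: G by rewrite fim /= inE; apply/orP; right; apply/imsetP; exists j; rewrite ?inE.
    case/imsetP => x hx hfx; exists x => //.
    by rewrite inE hx /= inE -hfx.
have cA0 : #|A0| = k.
  rewrite -(card_in_imset (sub_in2 (subsetP hA0G) finj)) fA0 card_imset ?cardsT ?card_ord //.
  by move=> a b [].
have cL : #|L| = l.
  rewrite -(card_in_imset (sub_in2 (subsetP hLG) finj)) fL card_imset ?cardsT ?card_ord //.
  by move=> a b [].
have iA0 : mrank M (A0 :|: C) = #|A0| + mrank M C.
  have := (find A0 hA0G).2.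
  have hin : f @: A0 \in indep (dsum (U k k) (U 0 l)).
    rewrite /dsum inE /= !inE; apply/andP; split; first (apply/andP; split).
    - by apply: leq_trans (max_card _) _; rewrite card_ord.
    - rewrite leqn0 cards_eq0; apply/eqP/setP => j; rewrite !inE fA0.
      by apply/negP => /imsetP [i _].
    - apply/subsetP => s _; rewrite inE; case: s => j; [apply/orP; left | apply/orP; right];
      by apply/imsetP; exists j; rewrite ?inE.
  move=> /(_ hin); rewrite inE => /andP[]; rewrite inE => /andP[_ /eqP] + _.
  by rewrite setUC.
have iL : forall e, e \in L -> mrank M (e |: C) = mrank M C.
  move=> e he.
  have heG : e \in G by move/subsetP: hLG; apply.
  have hsub : [set e] \subset G by rewrite sub1set.
  have hnin : f @: [set e] \notin indep (dsum (U k k) (U 0 l)).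
    rewrite imset_set1 /dsum inE /= !inE.
    move: he; rewrite !inE => /andP[_]; case: (f e) => // j _.
    have -> : [set y | inr y \in [set (inr j : ('I_k + 'I_l)%type)]] = [set j].
      by apply/setP => y; rewrite !inE eq_sym; apply/eqP/eqP => [[]|->].
    by rewrite cards1 andbF andFb.
  have hnN : [set e] \notin indep (delete (contract M C) D).
    by apply/negP => /(find _ hsub).1; apply/negP.
  have hnC : [set e] \notin indep (contract M C).
    apply/negP => h; move/negP: hnN; apply; rewrite /delete inE /= h /=.
    by rewrite -hG.
  move: hnC; rewrite /contract inE /= sub1set.
  move/subsetP: hGE => /(_ e heG) -> /=; rewrite cards1 => hne.
  apply/eqP; rewrite eqn_leq; apply/andP; split.
    have := mrank_addU hM C [set e]; rewrite cards1 setUC addn1.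
    by rewrite leq_eqVlt ltnS (negbTE hne) orFb // addnC add1n.
  by apply: mrank_mono; apply: subsetUr.
exists (C :|: L); split.
- rewrite subUset hCE /=; apply: subset_trans hLG _; apply: subset_trans hGE _; apply: subsetDl.
- rewrite mrank_closure // -cA0 addnC -iA0; apply: mrank_mono.
  rewrite subUset hCE andbT; apply: subset_trans hA0G _; apply: subset_trans hGE _; apply: subsetDl.
- rewrite mrank_closure // cardsU -cL.
  have -> : #|C :&: L| = 0.
    apply/eqP; rewrite cards_eq0; apply/eqP/setP => x; rewrite in_set0 inE.
    apply/negP => /andP[hxC hxL]; move/subsetP: hLG => /(_ x hxL).
    by move/subsetP: hGE => H /H; rewrite inE hxC.
  by rewrite subn0 leq_add2r mrank_le_card.
Qed.

Lemma sub_card_seq (T : finType) (S : {set T}) n : n <= #|S| ->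
  exists s : seq T, [/\ uniq s, size s = n & forall x, x \in s -> x \in S].
Proof.
move=> hn; exists (take n (enum S)); split.
- by apply: take_uniq; apply: enum_uniq.
- by rewrite size_takel // -cardE.
- by move=> x /mem_take; rewrite mem_enum.
Qed.

Lemma idx_inj (T : eqType) (s : seq T) n x y : size s = n.+1 -> x \in s -> y \in s ->
  (inord (index x s) : 'I_n.+1) = inord (index y s) -> x = y.
Proof.
move=> hs hx hy /(congr1 val); rewrite /= !inordK -?hs ?index_mem // => h.
by rewrite -(nth_index x hx) h nth_index.
Qed.

Lemma idx_surj (T : eqType) (s : seq T) n (j : 'I_n.+1) : uniq s -> size s = n.+1 ->
  exists2 x, x \in s & (inord (index x s) : 'I_n.+1) = j.
Proof.
case: s => [|a s] // hu hs; exists (nth a (a :: s) j).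
  by apply: mem_nth; rewrite hs.
by rewrite index_uniq ?hs // inord_val.
Qed.

Lemma bad_minor (k l : nat) (T : finType) (M : matroid T) : is_matroid M ->
  Bad k.+1 l.+1 M ->
  exists N : matroid T, is_minor N M /\ iso N (dsum (U k.+1 k.+1) (U 0 l.+1)).
Proof.
move=> hM [X [hXE hXr hXc]].
have [C [hC hCX hCc]] := mrank_wit hM X.
have [B [hB hCB hBc]] := basis_ext hM hC.
have hBE := m_sub hM hB.
have hCE : C \subset ground M := subset_trans hCX hXE.
have hXB : X :&: B = C.
  apply/eqP; rewrite eq_sym eqEcard subsetI hCX hCB /= hCc.
  have h1 : X :&: B \in indep M by apply: (m_her hM hB); apply: subsetIr.
  exact: (mrank_ge h1 (subsetIl X B)).
have [sI [uI sIs sIsub]] : exists s : seq T, [/\ uniq s, size s = k.+1 & forall x, x \in s -> x \in B :\: C].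
  apply: sub_card_seq; rewrite cardsD (setIidPr hCB) hBc hCc; lia.
have [sL [uL sLs sLsub]] : exists s : seq T, [/\ uniq s, size s = l.+1 & forall x, x \in s -> x \in X :\: C].
  apply: sub_card_seq; rewrite cardsD (setIidPr hCX) hCc; lia.
set I := [set x in sI]. set L := [set x in sL].
have hIBC : forall x, x \in I -> x \in B :\: C by move=> x; rewrite inE; apply: sIsub.
have hLXC : forall x, x \in L -> x \in X :\: C by move=> x; rewrite inE; apply: sLsub.
have hIL : forall x, x \in I -> x \notin L.
  move=> x /hIBC; rewrite inE => /andP[hxC hxB]; apply/negP => /hLXC.
  rewrite inE => /andP[_ hxX]; move: hxC; rewrite -hXB inE hxX hxB.
  done.
have hIE : forall x, x \in I -> x \in ground M :\: C.
  move=> x /hIBC; rewrite !inE => /andP[-> hx] /=; by move/subsetP: hBE; apply.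
have hLE : forall x, x \in L -> x \in ground M :\: C.
  move=> x /hLXC; rewrite !inE => /andP[-> hx] /=; by move/subsetP: hXE; apply.
set D := ground M :\: (C :|: I :|: L).
pose f (x : T) : ('I_k.+1 + 'I_l.+1)%type :=
  if x \in I then inl (inord (index x sI)) else inr (inord (index x sL)).
exists (delete (contract M C) D); split.
  exists C, D; split => //; first by apply: subsetDl.
  by rewrite disjoints_subset; apply/subsetP => x hxC; rewrite /D !inE hxC.
have hG : ground (delete (contract M C) D) = I :|: L.
  apply/setP => x; rewrite /= /D !inE.
  case hxI: (x \in sI).
    by have := hIE x; rewrite !inE => /(_ hxI) /andP[h1 h2]; rewrite h1 h2 !orbT /=.
  case hxL: (x \in sL).
    by have := hLE x; rewrite !inE => /(_ hxL) /andP[h1 h2]; rewrite h1 h2 !orbT /=.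
  by rewrite /=; case: (x \in C); case: (x \in ground M).
have memI : forall x, (x \in sI) = (x \in I) by move=> x; rewrite inE.
have memL : forall x, (x \in sL) = (x \in L) by move=> x; rewrite inE.
have hgd : ground (dsum (U k.+1 k.+1) (U 0 l.+1)) = setT.
  apply/setP; case=> j; rewrite !inE; apply/orP; [left|right]; apply/imsetP; exists j; by rewrite ?inE.
have fI : forall x, x \in I -> f x = inl (inord (index x sI)) by move=> x hx; rewrite /f hx.
have fL : forall x, x \in L -> f x = inr (inord (index x sL)).
  by move=> x hx; rewrite /f; case: ifP => // /hIL; rewrite hx.
exists f; split.
- rewrite hG => x y; rewrite inE => /orP[hx|hx]; rewrite inE => /orP[hy|hy].
  + rewrite !fI // => -[]; apply: idx_inj sIs _ _; by rewrite memI.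
  + by rewrite fI // fL.
  + by rewrite fL // fI.
  + rewrite !fL // => -[]; apply: idx_inj sLs _ _; by rewrite memL.
- rewrite hG hgd; apply/eqP; rewrite eqEsubset subsetT /=; apply/subsetP; case=> j _.
  + have [x hx hxj] := idx_surj j uI sIs.
    apply/imsetP; exists x; first by rewrite !inE hx.
    by rewrite fI ?inE // hxj.
  + have [x hx hxj] := idx_surj j uL sLs.
    apply/imsetP; exists x; first by rewrite !inE hx orbT.
    by rewrite fL ?inE // hxj.
move=> A hA0.
have hA : A \subset I :|: L by rewrite -hG.
have hA' : A \subset (ground M :\: C) :\: D := hA0.
have hAE : A \subset ground M :\: C.
  apply/subsetP => x /(subsetP hA); rewrite inE => /orP[]; [apply: hIE | apply: hLE].
have e2 : (f @: A \in indep (dsum (U k.+1 k.+1) (U 0 l.+1))) = (A :&: L == set0).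
  have hs : [set f x | x in A] \subset [set inl x | x in [set: 'I_k.+1]] :|: [set inr x | x in [set: 'I_l.+1]].
    by have := hgd; rewrite /= => ->; apply: subsetT.
  rewrite /dsum inE /= hs andbT !in_set.
  rewrite (leq_trans (max_card _)) ?card_ord //= leqn0 cards_eq0.
  rewrite -(negbK (_ == set0)) -(negbK (A :&: L == set0)); congr (~~ _).
  apply/set0Pn/set0Pn.
  - case=> y; rewrite inE => /imsetP [x hxA hfx]; exists x; rewrite inE hxA /=.
    move/subsetP: hA => /(_ x hxA); rewrite inE => /orP[hxI|] //.
    by rewrite fI in hfx.
  - case=> x; rewrite inE => /andP[hxA hxL]; exists (inord (index x sL)).
    by rewrite inE; apply/imsetP; exists x => //; rewrite fL.
have hAC : #|A :|: C| = #|A| + #|C|.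
  rewrite cardsU; have -> : A :&: C = set0.
    apply/setP => x; rewrite inE in_set0; apply/negP => /andP[hxA hxC].
    by move/subsetP: hAE => /(_ x hxA); rewrite inE hxC.
  by rewrite cards0 subn0.
have e1 : (mrank M (A :|: C) == #|A| + mrank M C) = (A :&: L == set0).
  rewrite (mrank_indep hC) -hAC.
  case: (set0Pn (A :&: L)) => [[e]|hn].
  - rewrite inE => /andP[heA heL].
    have -> : (A :&: L == set0) = false by apply/negbTE/set0Pn; exists e; rewrite inE heA.
    rewrite -mrank_indepE //; apply/negP => hi.
    have hi2 : e |: C \in indep M by apply: (m_her hM hi); apply: setSU; rewrite sub1set.
    have hsX : e |: C \subset X.
      rewrite subUset hCX sub1set andbT; have := hLXC e heL; rewrite inE => /andP[].
      done.
    have := mrank_ge hi2 hsX.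
    rewrite cardsU1 -hCc; have -> : e \notin C.
      by have := hLXC e heL; rewrite inE => /andP[].
    by rewrite ltnn.
  - have hS : A :&: L == set0 by apply/negPn/negP => /set0Pn.
    rewrite hS -mrank_indepE //.
    apply: (m_her hM hB); rewrite subUset hCB andbT; apply/subsetP => x hxA.
    have := subsetP hA x hxA; rewrite inE => /orP[hxI|hxL].
      by have := hIBC x hxI; rewrite inE => /andP[].
    move/eqP/setP: hS => /(_ x); rewrite inE hxA hxL in_set0.
    done.
rewrite /delete inE /= hA' andbT /contract inE /= hAE /= e1 e2.
done.
Qed.

Section Rep.
Variables (T : finType) (M : matroid T) (F : finFieldType) (n : nat) (v : T -> 'rV[F]_n).
Hypothesis hM : is_matroid M.
Hypothesis hrep : forall A : {set T}, A \subset ground M ->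
      (A \in indep M <->
       \rank (\matrix_(i < #|A|, j < n) v (@enum_val T (mem A) i) 0 j)%R = #|A|).

Implicit Types (A B X : {set T}).
Definition rowsm (A : {set T}) : 'M[F]_(#|A|, n) :=
  (\matrix_(i < #|A|, j < n) v (@enum_val T (mem A) i) 0 j)%R.

Lemma row_rowsm A i : row i (rowsm A) = v (enum_val i).
Proof. by apply/rowP => j; rewrite !mxE. Qed.

Lemma v_rowsm A x : x \in A -> (v x <= rowsm A)%MS.
Proof.
move=> hx; rewrite -(enum_rankK_in hx hx) -row_rowsm; apply: row_sub.
Qed.

Lemma rank_rowsm A : A \subset ground M -> (A \in indep M) = (\rank (rowsm A) == #|A|).
Proof. by move=> h; apply/idP/eqP => /(hrep h). Qed.

Lemma mrank_le_sp m (S : 'M[F]_(m, n)) X :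
  (forall x, x \in X -> (v x <= S)%MS) -> X \subset ground M -> mrank M X <= \rank S.
Proof.
move=> hS hX; apply/bigmax_leqP => A /andP[hA hAX].
have hAE : A \subset ground M by apply: subset_trans hAX hX.
move: hA; rewrite rank_rowsm // => /eqP <-; apply: mxrankS.
apply/row_subP => i; rewrite row_rowsm; apply: hS.
by move/subsetP: hAX; apply; apply: enum_valP.
Qed.

Lemma v_in_basis B e : B \in indep M -> #|B| = rk M -> e \in ground M -> (v e <= rowsm B)%MS.
Proof.
move=> hB hBc he; case: (boolP (e \in B)) => heB; first exact: v_rowsm.
apply/negPn/negP => hn.
have hB'E : e |: B \subset ground M by rewrite subUset sub1set he (m_sub hM hB).
have hBE : B \subset ground M := m_sub hM hB.
have hrB : \rank (rowsm B) = #|B| by apply/eqP; rewrite -rank_rowsm.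
have h1 : \rank (rowsm B) < \rank (rowsm B + v e)%MS.
  rewrite ltn_neqAle (mxrank_leqif_sup (addsmxSl _ _)) addsmx_sub submx_refl /= hn /=.
  by apply: mxrankS; apply: addsmxSl.
have h2 : (rowsm B + v e <= rowsm (e |: B))%MS.
  rewrite addsmx_sub; apply/andP; split; last by apply: v_rowsm; rewrite setU11.
  apply/row_subP => i; rewrite row_rowsm; apply: v_rowsm.
  by rewrite inE enum_valP orbT.
have hi : e |: B \in indep M.
  rewrite rank_rowsm //; apply/eqP/anti_leq; rewrite rank_leq_row /=.
  apply: (@leq_trans (#|B|.+1)); first by rewrite cardsU1 heB.
  by apply: leq_trans (mxrankS h2); rewrite hrB in h1.
have := mrank_ge hi hB'E; rewrite cardsU1 heB hBc -/(rk M) add1n ltnn.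
done.
Qed.

Lemma span_bound B (Z : {set 'I_#|B|}) (N' : {set T}) (c : T -> 'rV[F]_#|B|) :
  (forall e, e \in N' -> v e = (c e *m rowsm B)%R) ->
  (forall e i j, e \in N' -> i \in Z -> j \in Z -> c e ord0 i = c e ord0 j) ->
  N' :|: B \subset ground M ->
  mrank M (N' :|: (B :\: [set (@enum_val T (mem B) i) | i in Z])) <= #|B| - #|Z| + 1.
Proof.
move=> hc hconst hsub.
set Zs := [set (@enum_val T (mem B) i) | i in Z].
set u := (\sum_(i in Z) row i (rowsm B))%R.
have hZs : Zs \subset B by apply/subsetP => x /imsetP [i _ ->]; apply: enum_valP.
have cZs : #|Zs| = #|Z| by rewrite card_imset //; apply: enum_val_inj.
have cBZ : #|B :\: Zs| = #|B| - #|Z| by rewrite cardsD (setIidPr hZs) cZs.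
apply: (@leq_trans (\rank (rowsm (B :\: Zs) + u)%MS)).
  apply: mrank_le_sp; last first.
    apply: subset_trans hsub; apply: setUS; apply: subsetDl.
  move=> x; rewrite inE => /orP[hx|hx]; last first.
    by apply: submx_trans (addsmxSl _ _); apply: v_rowsm.
  rewrite hc // mulmx_sum_row (bigID (fun i => i \in Z)) /=.
  apply: addmx_sub.
    apply: submx_trans (addsmxSr _ _).
    case: (set_0Vmem Z) => [hZ|[i0 hi0]].
      by rewrite big_pred0 ?sub0mx // => i; rewrite hZ in_set0.
    have -> : (\sum_(i | true && (i \in Z)) c x ord0 i *: row i (rowsm B) = c x ord0 i0 *: u)%R.
      rewrite /u scaler_sumr; apply: eq_bigr => i hi; rewrite (hconst x i i0) //.
    by apply: scalemx_sub; apply: submx_refl.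
  apply: submx_trans (addsmxSl _ _).
  apply: summx_sub => i hi; apply: scalemx_sub; rewrite row_rowsm; apply: v_rowsm.
  rewrite inE enum_valP andbT; apply/negP => /imsetP [j hj /enum_val_inj hij].
  by move: hi; rewrite hij hj.
apply: leq_trans (mxrank_adds_leqif _ _) _; rewrite -cBZ; apply: leq_add; apply: rank_leq_row.
Qed.

End Rep.

Lemma fiber_count (I J : finType) (g : I -> J) (S : {pred J}) k :
  (forall i, g i \in S) -> (forall y, #|[set i | g i == y]| <= k) -> #|I| <= k * #|S|.
Proof.
move=> hS hf.
have -> : #|I| = \sum_(i in I) 1 by rewrite sum1_card.
rewrite (@partition_big _ _ _ _ _ _ (fun i => i \in I) g (mem S) (fun _ => 1)) /=; last by move=> i _; apply: hS.
rewrite mulnC -sum_nat_const; apply: leq_sum => y _.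
by rewrite sum1dep_card.
Qed.

Lemma cosimple_rank (T : finType) (M : matroid T) (Y : {set T}) :
  is_matroid M -> cosimple M -> Y \subset ground M -> #|Y| = 2 ->
  rk M <= mrank M (ground M :\: Y).
Proof.
move=> hM [_ hpair] hY /eqP /cards2P [x [y [hxy hY']]].
have hx : x \in ground M by move/subsetP: hY; apply; rewrite hY' !inE eqxx.
have hy : y \in ground M by move/subsetP: hY; apply; rewrite hY' !inE eqxx orbT.
have := hpair x y hx hy hxy; rewrite /dual inE /= => /andP[_ /existsP [B /andP[hBb hdis]]].
move: hBb; rewrite /is_basis => /andP[hB /eqP hBc].
have hBs : B \subset ground M :\: Y.
  apply/subsetP => z hz; rewrite inE (subsetP (m_sub hM hB) z hz) andbT hY'.
  by move: hdis; rewrite disjoint_sym => /disjointFr /(_ hz) ->.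
by rewrite -hBc; apply: mrank_ge hB hBs.
Qed.

Lemma Zs_facts (T : finType) (B : {set T}) (Z : {set 'I_#|B|}) :
  [set (@enum_val T (mem B) i) | i in Z] \subset B /\ #|[set (@enum_val T (mem B) i) | i in Z]| = #|Z|.
Proof.
split; first by apply/subsetP => x /imsetP [i _ ->]; apply: enum_valP.
by rewrite card_imset //; apply: enum_val_inj.
Qed.

Lemma rank_bound k l q (T : finType) (M : matroid T) : 0 < k -> 0 < l -> good k l q M ->
  rk M <= k * q ^ l.+1.
Proof.
case: k => // k _; case: l => // l _.
case=> hM _ hcos [F [n [v [hq hrep]]]] hkl.
have [B [hB hBE hBc]] := mrank_wit hM (ground M).
have hBc' : #|B| = rk M by [].
set Ns := ground M :\: B.
have [s [us ss ssub]] := @sub_card_seq _ Ns (minn l.+2 #|Ns|) (geq_minr _ _).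
set N' := [set x in s].
have cN' : #|N'| = minn l.+2 #|Ns| by rewrite cardsE (card_uniqP us) ss.
have hN'Ns : N' \subset Ns by apply/subsetP => x; rewrite inE; apply: ssub.
have hN'E : N' \subset ground M by apply: subset_trans hN'Ns _; apply: subsetDl.
have hsubE : N' :|: B \subset ground M by rewrite subUset hN'E hBE.
set MB := rowsm v B.
pose c e := (v e *m pinvmx MB)%R.
have hc : forall e, e \in N' -> v e = (c e *m MB)%R.
  move=> e he; rewrite /c mulmxKpV //; apply: (v_in_basis hM hrep hB hBc').
  by move/subsetP: hN'E; apply.
pose w (i : 'I_#|B|) : {ffun T -> F} := [ffun e => if e \in N' then c e ord0 i else 0%R].
have hfib : forall g, #|[set i | w i == g]| <= k.+1.
  move=> g; rewrite leqNgt; apply/negP => hlt.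
  set Fb := [set i | w i == g].
  have hconst : forall Z : {set 'I_#|B|}, Z \subset Fb -> forall e i j, e \in N' -> i \in Z -> j \in Z ->
      c e ord0 i = c e ord0 j.
    move=> Z hZ e i j he hi hj.
    have : w i e = w j e.
      by move: (subsetP hZ i hi) (subsetP hZ j hj); rewrite !inE => /eqP -> /eqP ->.
    by rewrite !ffunE he.
  have hBI : forall Z : {set 'I_#|B|}, #|Z| <= #|B|.
    by move=> Z; apply: leq_trans (max_card _) _; rewrite card_ord.
  case: (leqP l.+2 #|Ns|) => hNs.
  - have cN'2 : #|N'| = l.+2 by rewrite cN' (minn_idPl hNs).
    have [z [uz sz zsub]] := @sub_card_seq _ Fb k.+2 hlt.
    set Z := [set x in z].
    have cZ : #|Z| = k.+2 by rewrite cardsE (card_uniqP uz) sz.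
    have hZF : Z \subset Fb by apply/subsetP => x; rewrite inE; apply: zsub.
    have hsp := span_bound hrep hc (hconst Z hZF) hsubE.
    have [hZsB cZs] := Zs_facts Z.
    move: hsp hZsB cZs; set Zs := [set (@enum_val T (mem B) i) | i in Z] => hsp hZsB cZs.
    have hBZ := hBI Z.
    have cX : #|N' :|: (B :\: Zs)| = l.+2 + (#|B| - k.+2).
      rewrite cardsU cardsD (setIidPr hZsB) cZs cZ cN'2.
      have -> : N' :&: (B :\: Zs) = set0.
        apply/setP => x; rewrite inE in_set0; apply/negP => /andP[hx1 hx2].
        move/subsetP: hN'Ns => /(_ x hx1); rewrite inE.
        by move: hx2; rewrite inE => /andP[_ ->].
      by rewrite cards0 subn0.
    apply: hkl; apply: bad_minor hM _; exists (N' :|: (B :\: Zs)); split.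
    + apply: subset_trans hsubE; apply: setUS; apply: subsetDl.
    + rewrite -hBc'; rewrite cZ in hsp hBZ; lia.
    + rewrite cX; rewrite cZ in hsp hBZ; lia.
  - have hN'eq : N' = Ns.
      by apply/eqP; rewrite eqEcard hN'Ns cN' (minn_idPr (ltnW hNs)) leqnn.
    have h2 : 2 <= #|Fb| by apply: (leq_trans _ hlt).
    have [z [uz sz zsub]] := @sub_card_seq _ Fb 2 h2.
    set Z := [set x in z].
    have cZ : #|Z| = 2 by rewrite cardsE (card_uniqP uz) sz.
    have hZF : Z \subset Fb by apply/subsetP => x; rewrite inE; apply: zsub.
    have hsp := span_bound hrep hc (hconst Z hZF) hsubE.
    have [hZsB cZs] := Zs_facts Z.
    move: hsp hZsB cZs; set Zs := [set (@enum_val T (mem B) i) | i in Z] => hsp hZsB cZs.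
    have hBZ := hBI Z.
    have hcr := cosimple_rank hM hcos (subset_trans hZsB hBE) (etrans cZs cZ).
    have hmono : mrank M (ground M :\: Zs) <= mrank M (N' :|: (B :\: Zs)).
      apply: mrank_mono; rewrite hN'eq; apply/subsetP => x; rewrite !inE => /andP[hxZ hxE].
      rewrite hxZ hxE /=; by case: (x \in B).
    rewrite cZ in hsp hBZ; rewrite -hBc' in hcr; lia.
have hw : forall i, w i \in pffun_on (0%R : F) N' [set: F].
  move=> i; apply/pffun_onP; split; last by move=> y _; rewrite inE.
  apply/subsetP => e; rewrite inE /w ffunE; case: (e \in N') => //.
  by rewrite eqxx.
have := fiber_count hw hfib; rewrite card_pffun_on card_ord cardsT hq hBc'.
move=> h; apply: leq_trans h _; rewrite leq_mul2l; apply/orP; right.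
apply: leq_pexp2l; first by rewrite -hq; apply/card_gt0P; exists 0%R.
by rewrite cN' geq_minl.
Qed.

Lemma bad_contra k l (T : finType) (M : matroid T) : is_matroid M -> 0 < k -> 0 < l ->
  kl_uniform k l M -> Bad k l M -> False.
Proof.
case: k => // k; case: l => // l hM _ _ hkl hb; apply: hkl; exact: bad_minor hM hb.
Qed.

Section Restrict.
Variables (T : finType) (M : matroid T) (X : {set T}).
Hypothesis hM : is_matroid M.
Hypothesis hXE : X \subset ground M.
Let M' := delete M (ground M :\: X).
Implicit Types (A B Y : {set T}).

Lemma gr_res : ground M' = X.
Proof.
apply/setP => x; rewrite /M' /= !inE; case hx: (x \in X) => /=; last by rewrite andNb.
by rewrite (subsetP hXE x hx).
Qed.

Lemma indep_res A : (A \in indep M') = (A \in indep M) && (A \subset X).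
Proof. by rewrite /M' /= inE -[ground M :\: (ground M :\: X)]/(ground M') gr_res. Qed.

Lemma mrank_res Y : Y \subset X -> mrank M' Y = mrank M Y.
Proof.
move=> hY; rewrite /mrank; apply: eq_bigl => A; rewrite indep_res.
case: (A \in indep M) => //=; case hA: (A \subset Y); rewrite ?andbF ?andbT //.
exact: subset_trans hA hY.
Qed.

Lemma res_matroid : is_matroid M'.
Proof.
split.
- by rewrite indep_res m_set0 // sub0set.
- by move=> A; rewrite indep_res gr_res => /andP[].
- move=> A B; rewrite !indep_res => /andP[hB hBX] hAB.
  by rewrite (m_her hM hB hAB) (subset_trans hAB hBX).
- move=> A B; rewrite !indep_res => /andP[hA hAX] /andP[hB hBX] hlt.
  have [x hx hxA] := m_aug hM hA hB hlt; exists x => //.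
  rewrite indep_res hxA subUset hAX andbT sub1set.
  by move: hx; rewrite inE => /andP[_ /(subsetP hBX)].
Qed.

Lemma rk_res : rk M' = mrank M X.
Proof. by rewrite /rk gr_res mrank_res. Qed.

End Restrict.

Lemma dual_indep (T : finType) (M : matroid T) (Y : {set T}) : is_matroid M ->
  Y \subset ground M -> rk M <= mrank M (ground M :\: Y) -> Y \in indep (dual M).
Proof.
move=> hM hY hr; rewrite /dual inE /= hY /=.
have [B [hB hBs hBc]] := mrank_wit hM (ground M :\: Y).
apply/existsP; exists B; rewrite /is_basis hB /=; apply/andP; split.
  apply/eqP/anti_leq; rewrite hBc hr andbT.
  by apply: mrank_mono; apply: subsetDl.
rewrite disjoint_sym disjoints_subset; apply: subset_trans hBs _.
by apply/subsetP => x; rewrite !inE => /andP[].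
Qed.

Lemma restrict_good k l q (T : finType) (M : matroid T) (X : {set T}) :
  0 < k -> 0 < l -> good k l q M -> X \subset ground M ->
  mrank M X + k.-1 = rk M -> mrank M X + l.+1 <= #|X| ->
  good 1 l q (delete M (ground M :\: X)) /\ rk (delete M (ground M :\: X)) = mrank M X.
Proof.
move=> hk hl [hM [hs1 hs2] hcos [F [n [v [hq hrep]]]] hkl] hXE hXr hXc.
have bad := bad_contra hM hk hl hkl.
have hM' := res_matroid hM hXE.
split; last exact: rk_res.
have inner : forall Y : {set T}, Y \subset X -> #|Y| <= 2 -> mrank M X <= mrank M (X :\: Y).
  move=> Y hY hY2; rewrite leqNgt; apply/negP => hlt; apply: bad.
  exists (X :\: Y); split.
  - apply: subset_trans hXE; apply: subsetDl.
  - lia.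
  - rewrite cardsD (setIidPr hY); have := mrank_le_card M (X :\: Y); lia.
have dualY : forall Y : {set T}, Y \subset X -> #|Y| <= 2 ->
    Y \in indep (dual (delete M (ground M :\: X))).
  move=> Y hY hY2; apply: dual_indep => //; first by rewrite gr_res.
  rewrite rk_res // gr_res // mrank_res //; last by apply: subsetDl.
  exact: inner.
split => //.
- split.
  + move=> x; rewrite gr_res // => hx; rewrite indep_res // hs1 ?sub1set //.
    exact: (subsetP hXE).
  + move=> x y; rewrite gr_res // => hx hy hxy; rewrite indep_res // hs2 //.
    * by rewrite subUset !sub1set hx hy.
    * exact: (subsetP hXE).
    * exact: (subsetP hXE).
- split.
  + move=> x; rewrite /= => hx; apply: dualY; first by rewrite -(gr_res hXE) sub1set.
    by rewrite cards1.
  + move=> x y; rewrite /= => hx hy hxy; apply: dualY.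
      by rewrite -(gr_res hXE) subUset !sub1set hx hy.
    by rewrite cards2 hxy.
- exists F, n, v; split => // A; rewrite gr_res // => hA; rewrite indep_res // hA andbT.
  by apply: hrep; apply: subset_trans hXE.
- move=> hm; have [W [hW hW1 hW2]] := minor_bad hM' hm.
  rewrite gr_res // in hW; rewrite rk_res // mrank_res // in hW1; rewrite mrank_res // in hW2.
  apply: bad; exists W; split => //.
  + exact: subset_trans hW hXE.
  + lia.
Qed.

Definition Pgood (k l q r : nat) : Prop :=
  exists (T : finType) (M : matroid T), good k l q M /\ rk M = r.

Definition Pb (k l q r : nat) : bool :=
  if excluded_middle_informative (Pgood k l q r) then true else false.

Lemma PbP k l q r : reflect (Pgood k l q r) (Pb k l q r).
Proof. by rewrite /Pb; case: excluded_middle_informative => h; constructor. Qed.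

Definition fmax (k l q : nat) : nat := \max_(r < (k * q ^ l.+1).+1 | Pb k l q r) r.

Lemma set0_I0 (A : {set 'I_0}) : A = set0.
Proof. by apply/setP => -[]. Qed.

Definition M0 : matroid 'I_0 := Matroid set0 [set set0].

Lemma good_M0 k l q : 0 < k -> prime_power q -> good k l q M0.
Proof.
case: k => // k _ [p [e [hp he ->]]].
split.
- split => /=.
  + by rewrite inE.
  + by move=> A _; rewrite (set0_I0 A) sub0set.
  + by move=> A B _ _; rewrite (set0_I0 A) inE.
  + by move=> A B _ _; rewrite (set0_I0 A) (set0_I0 B) ltnn.
- by split => -[].
- by split => -[].
- have [F _ hF] := pPrimePowerField hp he.
  exists F, 0, (fun _ => 0%R); split => // A _; rewrite (set0_I0 A) /= inE eqxx cards0.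
  split => // _; apply/eqP; rewrite -leqn0; apply: rank_leq_col.
- move=> [N [[C [D [_ _ _ hN]]] [f [_ fim _]]]].
  have : (inl ord0 : ('I_k.+1 + 'I_l)%type) \in ground (dsum (U k.+1 k.+1) (U 0 l)).
    by rewrite /= inE; apply/orP; left; apply/imsetP; exists ord0; rewrite ?inE.
  by rewrite -fim (set0_I0 (ground N)) imset0 inE.
Qed.

Lemma rk_M0 : rk M0 = 0.
Proof. by apply/eqP; rewrite -leqn0; apply: leq_trans (mrank_le_card _ _) _; rewrite cards0. Qed.

Lemma fmax_bound k l q (T : finType) (M : matroid T) : 0 < k -> 0 < l ->
  good k l q M -> rk M <= fmax k l q.
Proof.
move=> hk hl hg.
have hb : rk M < (k * q ^ l.+1).+1 by rewrite ltnS; apply: rank_bound.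
apply: (@leq_bigmax_cond _ (fun r : 'I_(k * q ^ l.+1).+1 => Pb k l q r) (fun r => nat_of_ord r) (Ordinal hb)).
by apply/PbP; exists T, M.
Qed.

Lemma fmax_att k l q : 0 < k -> prime_power q -> Pgood k l q (fmax k l q).
Proof.
move=> hk hq.
have : 0 < #|[pred r : 'I_(k * q ^ l.+1).+1 | Pb k l q r]|.
  apply/card_gt0P; exists ord0; rewrite inE; apply/PbP.
  by exists _, M0; split; [apply: good_M0 | apply: rk_M0].
move/(eq_bigmax_cond (fun r : 'I_(k * q ^ l.+1).+1 => nat_of_ord r)) => [i0 hi0 heq].
rewrite /fmax heq; apply/PbP; exact: hi0.
Qed.

Theorem proposition2p3 :
  exists f : nat -> nat -> nat -> nat,
    forall k l q : nat, 0 < k -> 0 < l -> prime_power q ->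
      [/\ (* f(k,l,q) bounds the rank of every such matroid ... *)
          (forall (T : finType) (M : matroid T), good k l q M -> rk M <= f k l q),
          (* ... and is attained, i.e. it is the maximum rank *)
          (exists (T : finType) (M : matroid T), good k l q M /\ rk M = f k l q) &
          (2 <= k ->
             f k l q <= maxn (f k.-1 l.+1 q) (f 1 l q + k.-1))].
Proof.
exists fmax => k l q hk hl hq; split.
- by move=> T M; apply: fmax_bound.
- exact: fmax_att.
move=> hk2.
have [T [M [hg hr]]] := fmax_att l hk hq.
rewrite -hr.
have hk1 : 0 < k.-1 by lia.
case: (classic (kl_uniform k.-1 l.+1 M)) => hu.
  apply: leq_trans (leq_maxl _ _); apply: fmax_bound => //.
  by case: hg => ? ? ? ? _; split.
have hM : is_matroid M by case: hg.
have [X [hXE hX1 hX2]] : Bad k.-1 l.+1 M.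
  exact: (minor_bad hM (NNPP _ hu)).
have hkl : kl_uniform k l M by case: hg.
have hXr : mrank M X + k.-1 = rk M.
  apply/eqP; rewrite eqn_leq hX1 /= leqNgt; apply/negP => hlt.
  apply: (bad_contra hM hk hl hkl); exists X; split => //; lia.
have [hg' hr'] := restrict_good hk hl hg hXE hXr hX2.
apply: leq_trans (leq_maxr _ _).
rewrite -hXr leq_add2r -hr'; exact: fmax_bound hg'.
Qed.
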